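(* Suppose Assumptions (A), (B) and (C) hold, let $t\in(0,1/L_f]$ and $s\in\left(0,\frac{2}{L_\omega+\sigma}\right]$, and let $\{\mathbf x^k\}$ be generated by BiG-SAM from any $\mathbf x^0\in\mathbb R^n$. Then $\{\mathbf x^k\}$ converges to a point $\mathbf x^*\in X^*$ satisfying $\langle\nabla\omega(\mathbf x^* ),\mathbf x-\mathbf x^*\rangle\ge 0$ for all $\mathbf x\in X^*$; consequently $\mathbf x^*=\mathbf x^*_{mn}$, the unique minimizer of $\omega$ over $X^*$.
   Context: Assumption (A): $f:\mathbb R^n\to\mathbb R$ is convex and continuously differentiable with $L_f$-Lipschitz gradient; $g:\mathbb R^n\to(-\infty,\infty]$ is proper, lower semicontinuous and convex; the set $X^*$ of minimizers of $\varphi=f+g$ over $\mathbb R^n$ is nonempty. Assumption (B): $\omega:\mathbb R^n\to\mathbb R$ is $\sigma$-strongly convex ($\sigma>0$) and continuously differentiable with $L_\omega$-Lipschitz gradient. Assumption (C): $\{\alpha_k\}_{k\ge1}\subset(0,1]$, $\lim_k\alpha_k=0$, $\sum_k\alpha_k=\infty$, $\lim_k\alpha_{k+1}/\alpha_k=1$. For a proper lsc convex $h$, $\operatorname{prox}_h(\mathbf x)=\arg\min_{\mathbf u}\{h(\mathbf u)+\frac12\|\mathbf u-\mathbf x\|^2\}$. BiG-SAM: for $k=1,2,\dots$ set $\mathbf y^k=\operatorname{prox}_{tg}(\mathbf x^{k-1}-t\nabla f(\mathbf x^{k-1}))$, $\mathbf z^k=\mathbf x^{k-1}-s\nabla\omega(\mathbf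 x^{k-1})$, $\mathbf x^k=\alpha_k\mathbf z^k+(1-\alpha_k)\mathbf y^k$. *)

(* Defs.v *)
From Stdlib Require Import Reals Lra Lia.
From Stdlib Require Vectors.Fin.
Open Scope R_scope.

Definition Vec (n : nat) : Type := Fin.t n -> R.

Definition vadd {n} (u v : Vec n) : Vec n := fun i => u i + v i.
Definition vsub {n} (u v : Vec n) : Vec n := fun i => u i - v i.
Definition vscale {n} (a : R) (u : Vec n) : Vec n := fun i => a * u i.

Fixpoint dot (n : nat) : Vec n -> Vec n -> R :=
  match n return Vec n -> Vec n -> R with
  | O => fun _ _ => 0
  | S m => fun u v => u Fin.F1 * v Fin.F1
                      + dot m (fun i => u (Fin.FS i)) (fun i => v (Fin.FS i))
  end.
Arguments dot {n} u v.

Definition norm {n} (u : Vec n) : R := sqrt (dot u u).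

Definition convex {n} (h : Vec n -> R) : Prop :=
  forall x y l, 0 <= l <= 1 ->
    h (vadd (vscale l x) (vscale (1 - l) y)) <= l * h x + (1 - l) * h y.

Definition strongly_convex {n} (sigma : R) (h : Vec n -> R) : Prop :=
  forall x y l, 0 <= l <= 1 ->
    h (vadd (vscale l x) (vscale (1 - l) y))
    <= l * h x + (1 - l) * h y - sigma / 2 * l * (1 - l) * (norm (vsub x y))^2.

Definition is_gradient {n} (h : Vec n -> R) (gh : Vec n -> Vec n) : Prop :=
  forall x eps, 0 < eps -> exists delta, 0 < delta /\
    forall d, norm d < delta ->
      Rabs (h (vadd x d) - h x - dot (gh x) d) <= eps * norm d.

Definition lipschitz {n} (L : R) (F : Vec n -> Vec n) : Prop :=
  0 <= L /\ forall x y, norm (vsub (F x) (F y)) <= L * norm (vsub x y).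

Inductive ER : Type := ERfin (r : R) | PInf.

Definition ER_le (a b : ER) : Prop :=
  match a, b with
  | _, PInf => True
  | PInf, ERfin _ => False
  | ERfin x, ERfin y => x <= y
  end.

Definition ER_lt (a b : ER) : Prop :=
  match a, b with
  | ERfin x, PInf => True
  | PInf, _ => False
  | ERfin x, ERfin y => x < y
  end.

Definition ER_addr (e : ER) (r : R) : ER :=
  match e with ERfin x => ERfin (x + r) | PInf => PInf end.

(** a * e for a > 0 *)
Definition ER_scale (a : R) (e : ER) : ER :=
  match e with ERfin x => ERfin (a * x) | PInf => PInf end.

(** convex combination l*a + (1-l)*b, used only for 0 < l < 1 *)
Definition ER_comb (l : R) (a b : ER) : ER :=
  match a, b with
  | ERfin x, ERfin y => ERfin (l * x + (1 - l) * y)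
  | _, _ => PInf
  end.

Definition proper {n} (g : Vec n -> ER) : Prop :=
  exists x r, g x = ERfin r.

Definition lsc {n} (g : Vec n -> ER) : Prop :=
  forall x a, ER_lt (ERfin a) (g x) ->
    exists delta, 0 < delta /\
      forall y, norm (vsub y x) < delta -> ER_lt (ERfin a) (g y).

Definition ext_convex {n} (g : Vec n -> ER) : Prop :=
  forall x y l, 0 < l < 1 ->
    ER_le (g (vadd (vscale l x) (vscale (1 - l) y))) (ER_comb l (g x) (g y)).

Definition is_prox {n} (t : R) (g : Vec n -> ER) (x p : Vec n) : Prop :=
  forall u,
    ER_le (ER_addr (ER_scale t (g p)) (/ 2 * (norm (vsub p x))^2))
          (ER_addr (ER_scale t (g u)) (/ 2 * (norm (vsub u x))^2)).

Definition phi {n} (f : Vec n -> R) (g : Vec n -> ER) (x : Vec n) : ER :=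
  ER_addr (g x) (f x).

Definition in_Xstar {n} (f : Vec n -> R) (g : Vec n -> ER) (x : Vec n) : Prop :=
  forall y, ER_le (phi f g x) (phi f g y).

Definition vconverges {n} (u : nat -> Vec n) (l : Vec n) : Prop :=
  forall eps, 0 < eps -> exists N, forall k, (N <= k)%nat -> norm (vsub (u k) l) < eps.

(* Main.v *)
Require Import Defs.
From Stdlib Require Import Reals Lra Lia Psatz FunctionalExtensionality Classical ClassicalEpsilon.
From Stdlib Require Vectors.Fin.
Open Scope R_scope.

Lemma veq {n} (u v : Vec n) : (forall i, u i = v i) -> u = v.
Proof. intros; apply functional_extensionality; auto. Qed.

Lemma dot_sym n (u v : Vec n) : dot u v = dot v u.
Proof. revert u v; induction n; intros; simpl; [reflexivity|]. rewrite IHn; ring. Qed.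

Lemma dot_lin n (a b : R) (u v w : Vec n) :
  dot (fun i => a * u i + b * v i) w = a * dot u w + b * dot v w.
Proof.
  revert u v w; induction n; intros; simpl; [ring|].
  specialize (IHn (fun i => u (Fin.FS i)) (fun i => v (Fin.FS i)) (fun i => w (Fin.FS i))).
  cbv beta in IHn. rewrite IHn. ring.
Qed.

Lemma dot_add_l n (u v w : Vec n) : dot (vadd u v) w = dot u w + dot v w.
Proof.
  replace (vadd u v) with (fun i => 1 * u i + 1 * v i).
  rewrite dot_lin; ring. apply veq; intros; unfold vadd; ring.
Qed.
Lemma dot_sub_l n (u v w : Vec n) : dot (vsub u v) w = dot u w - dot v w.
Proof.
  replace (vsub u v) with (fun i => 1 * u i + (-1) * v i).
  rewrite dot_lin; ring. apply veq; intros; unfold vsub; ring.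
Qed.
Lemma dot_scale_l n a (u w : Vec n) : dot (vscale a u) w = a * dot u w.
Proof.
  replace (vscale a u) with (fun i => a * u i + 0 * u i).
  rewrite dot_lin; ring. apply veq; intros; unfold vscale; ring.
Qed.
Lemma dot_add_r n (u v w : Vec n) : dot w (vadd u v) = dot w u + dot w v.
Proof. rewrite !(dot_sym n w). apply dot_add_l. Qed.
Lemma dot_sub_r n (u v w : Vec n) : dot w (vsub u v) = dot w u - dot w v.
Proof. rewrite !(dot_sym n w). apply dot_sub_l. Qed.
Lemma dot_scale_r n a (u w : Vec n) : dot w (vscale a u) = a * dot w u.
Proof. rewrite !(dot_sym n w). apply dot_scale_l. Qed.

Lemma dot_nonneg n (u : Vec n) : 0 <= dot u u.
Proof. revert u; induction n; intros; simpl; [lra|]. specialize (IHn (fun i => u (Fin.FS i))). nra. Qed.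

Lemma dot_zero_eq n (u : Vec n) : dot u u = 0 -> forall i, u i = 0.
Proof.
  revert u; induction n; intros u H i; [inversion i|].
  simpl in H. pose proof (dot_nonneg n (fun i => u (Fin.FS i))).
  assert (u Fin.F1 = 0) by nra.
  assert (dot (fun i => u (Fin.FS i)) (fun i => u (Fin.FS i)) = 0) by nra.
  revert u H H0 H1 H2. pattern i. apply Fin.caseS'; intros; auto.
  apply (IHn (fun i => u (Fin.FS i)) H2).
Qed.

Lemma dot_zero_r n (u : Vec n) : dot u (fun _ => 0) = 0.
Proof. revert u; induction n; intros; simpl; [reflexivity|]. rewrite IHn; ring. Qed.

Lemma dot_eq_zero_r n (u v : Vec n) : dot v v = 0 -> dot u v = 0.
Proof. intros H. replace v with (fun _ : Fin.t n => 0). apply dot_zero_r.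
  apply veq; intros; symmetry; apply dot_zero_eq; auto. Qed.

Lemma cauchy_schwarz_sq n (u v : Vec n) : (dot u v)^2 <= dot u u * dot v v.
Proof.
  pose proof (dot_nonneg n u). pose proof (dot_nonneg n v).
  destruct (Req_dec (dot v v) 0) as [E|E].
  - rewrite (dot_eq_zero_r n u v E). nra.
  - set (l := dot u v / dot v v).
    pose proof (dot_nonneg n (vsub u (vscale l v))).
    rewrite dot_sub_l, !dot_sub_r, !dot_scale_l, !dot_scale_r in H1.
    rewrite (dot_sym n v u) in H1.
    assert (Hl : l * dot v v = dot u v) by (unfold l; field; auto).
    assert (0 < dot v v) by lra. nra.
Qed.

Definition nsq {n} (u : Vec n) := dot u u.

Lemma norm_nonneg n (u : Vec n) : 0 <= norm u.
Proof. apply sqrt_pos. Qed.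
Lemma norm_sq n (u : Vec n) : norm u ^ 2 = dot u u.
Proof. unfold norm. rewrite <- Rsqr_pow2. apply Rsqr_sqrt, dot_nonneg. Qed.

Lemma abs_le_of_sq x N : 0 <= N -> x^2 <= N^2 -> Rabs x <= N.
Proof. intros. unfold Rabs; destruct Rcase_abs; nra. Qed.

Lemma cauchy_schwarz n (u v : Vec n) : Rabs (dot u v) <= norm u * norm v.
Proof.
  apply abs_le_of_sq. apply Rmult_le_pos; apply norm_nonneg.
  pose proof (norm_sq n u); pose proof (norm_sq n v); pose proof (cauchy_schwarz_sq n u v). nra.
Qed.

Lemma cs_le n (u v : Vec n) : dot u v <= norm u * norm v.
Proof. pose proof (cauchy_schwarz n u v). pose proof (Rle_abs (dot u v)); pose proof (Rle_abs (- dot u v)); rewrite Rabs_Ropp in *; lra. Qed.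
Lemma cs_ge n (u v : Vec n) : - (norm u * norm v) <= dot u v.
Proof. pose proof (cauchy_schwarz n u v). pose proof (Rle_abs (dot u v)); pose proof (Rle_abs (- dot u v)); rewrite Rabs_Ropp in *; lra. Qed.

Lemma norm_le_of_sq n (u : Vec n) c : 0 <= c -> dot u u <= c^2 -> norm u <= c.
Proof. intros. unfold norm. rewrite <- (sqrt_pow2 c H). apply sqrt_le_1_alt. lra. Qed.
Lemma norm_lt_of_sq n (u : Vec n) c : 0 <= c -> dot u u < c^2 -> norm u < c.
Proof. intros. unfold norm. rewrite <- (sqrt_pow2 c H). apply sqrt_lt_1_alt. split; [apply dot_nonneg|lra]. Qed.

Lemma norm_scale n a (u : Vec n) : norm (vscale a u) = Rabs a * norm u.
Proof.
  unfold norm. rewrite dot_scale_l, dot_scale_r. rewrite <- Rmult_assoc.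
  rewrite sqrt_mult_alt by nra. rewrite <- sqrt_Rsqr_abs. reflexivity.
Qed.

Lemma norm_triangle n (u v : Vec n) : norm (vadd u v) <= norm u + norm v.
Proof.
  apply norm_le_of_sq. pose proof (norm_nonneg n u); pose proof (norm_nonneg n v); lra.
  rewrite dot_add_l, !dot_add_r. pose proof (cs_le n u v).
  pose proof (norm_sq n u); pose proof (norm_sq n v). rewrite (dot_sym n v u). nra.
Qed.

Lemma nsq_add n (u v : Vec n) : dot (vadd u v) (vadd u v) = dot u u + 2 * dot u v + dot v v.
Proof. rewrite dot_add_l, !dot_add_r, (dot_sym n v u). ring. Qed.
Lemma nsq_sub n (u v : Vec n) : dot (vsub u v) (vsub u v) = dot u u - 2 * dot u v + dot v v.
Proof. rewrite dot_sub_l, !dot_sub_r, (dot_sym n v u). ring. Qed.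

Lemma vsub_sym_norm n (u v : Vec n) : norm (vsub u v) = norm (vsub v u).
Proof. unfold norm. rewrite !nsq_sub, (dot_sym n u v). f_equal; ring. Qed.

Lemma norm_sub_tri n (u v w : Vec n) : norm (vsub u w) <= norm (vsub u v) + norm (vsub v w).
Proof. replace (vsub u w) with (vadd (vsub u v) (vsub v w)). apply norm_triangle.
  apply veq; intros; unfold vadd, vsub; ring. Qed.

Lemma norm_zero_iff n (u : Vec n) : norm u = 0 -> u = (fun _ => 0).
Proof. intros. apply veq; intros. apply dot_zero_eq. rewrite <- norm_sq, H. ring. Qed.

Lemma norm_vsub_self n (u : Vec n) : norm (vsub u u) = 0.
Proof. unfold norm. rewrite nsq_sub. replace (dot u u - 2 * dot u u + dot u u) with 0 by ring. apply sqrt_0. Qed.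

Lemma le_eps a b c : 0 <= c -> (forall eps, 0 < eps -> a <= b + eps * c) -> a <= b.
Proof.
  intros Hc H. destruct (Rle_dec a b) as [|Hn]; auto. exfalso.
  assert (0 < (a - b) / (2 * (c + 1))) by (apply Rdiv_lt_0_compat; lra).
  specialize (H _ H0).
  assert ((a - b) / (2 * (c + 1)) * c < a - b).
  { apply Rmult_lt_reg_r with (2 * (c+1)). lra.
    field_simplify; [|lra]. nra. }
  lra.
Qed.

Lemma line_point n (x y : Vec n) tau :
  vadd (vscale tau y) (vscale (1 - tau) x) = vadd x (vscale tau (vsub y x)).
Proof. apply veq; intros; unfold vadd, vscale, vsub; ring. Qed.

Lemma sc_grad_ineq n sigma (h : Vec n -> R) gh :
  0 <= sigma -> strongly_convex sigma h -> is_gradient h gh ->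
  forall x y, h x + dot (gh x) (vsub y x) + sigma / 2 * dot (vsub y x) (vsub y x) <= h y.
Proof.
  intros Hs Hc Hg x y. set (d := vsub y x).
  pose proof (norm_nonneg n d) as Hd0.
  assert (Hnd := norm_sq n d).
  cut (dot (gh x) d <= h y - h x - sigma / 2 * dot d d). lra.
  apply le_eps with (c := sigma / 2 * dot d d + norm d).
  { pose proof (dot_nonneg n d). nra. }
  intros eps Heps.
  destruct (Hg x eps Heps) as [delta [Hdel Hd]].
  set (tau := Rmin eps (Rmin 1 (delta / (2 * (norm d + 1))))).
  assert (Ht1 : 0 < tau).
  { unfold tau. repeat apply Rmin_pos; try lra. apply Rdiv_lt_0_compat; lra. }
  assert (Ht2 : tau <= 1) by (unfold tau; eapply Rle_trans; [apply Rmin_r|apply Rmin_l]).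
  assert (Ht3 : tau <= eps) by (unfold tau; apply Rmin_l).
  assert (Ht4 : tau <= delta / (2 * (norm d + 1))) by (unfold tau; eapply Rle_trans; [apply Rmin_r|apply Rmin_r]).
  assert (Hn : norm (vscale tau d) < delta).
  { rewrite norm_scale, Rabs_pos_eq by lra.
    assert (tau * norm d <= delta / (2 * (norm d + 1)) * norm d) by (apply Rmult_le_compat_r; lra).
    assert (delta / (2 * (norm d + 1)) * norm d < delta).
    { apply Rmult_lt_reg_r with (2 * (norm d + 1)). lra. field_simplify; nra. }
    lra. }
  specialize (Hd _ Hn). rewrite norm_scale, (Rabs_pos_eq tau) in Hd by lra.
  rewrite dot_scale_r in Hd.
  specialize (Hc y x tau (conj (Rlt_le _ _ Ht1) Ht2)).
  rewrite line_point in Hc. fold d in Hc.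
  rewrite Hnd in Hc.
  pose proof (Rle_abs (- (h (vadd x (vscale tau d)) - h x - tau * dot (gh x) d))) as Ha.
  rewrite Rabs_Ropp in Ha.
  pose proof (dot_nonneg n d) as Hdd.
  apply Rmult_le_reg_l with tau; [lra|].
  assert (sigma / 2 * tau * tau * dot d d <= sigma / 2 * tau * eps * dot d d).
  { apply Rmult_le_compat_r. lra. apply Rmult_le_compat_l. nra. lra. }
  nra.
Qed.

Lemma convex_sc n (h : Vec n -> R) : convex h -> strongly_convex 0 h.
Proof. intros H x y l Hl. specialize (H x y l Hl). lra. Qed.

Lemma sc_convex n s (h : Vec n -> R) : 0 <= s -> strongly_convex s h -> convex h.
Proof. intros Hs H x y l Hl. specialize (H x y l Hl). pose proof (norm_nonneg n (vsub x y)).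
  assert (0 <= s / 2 * l * (1 - l) * norm (vsub x y) ^ 2).
  { repeat apply Rmult_le_pos; try lra. }
  lra. Qed.

Lemma grad_ineq n (h : Vec n -> R) gh :
  convex h -> is_gradient h gh -> forall x y, h x + dot (gh x) (vsub y x) <= h y.
Proof. intros Hc Hg x y. pose proof (sc_grad_ineq n 0 h gh (Rle_refl 0) (convex_sc n h Hc) Hg x y). lra. Qed.


Lemma line_deriv n (h : Vec n -> R) gh : is_gradient h gh ->
  forall x d tau, derivable_pt_lim (fun s => h (vadd x (vscale s d))) tau
                    (dot (gh (vadd x (vscale tau d))) d).
Proof.
  intros Hg x d tau eps Heps.
  set (p := vadd x (vscale tau d)).
  pose proof (norm_nonneg n d) as Hd0.
  assert (He' : 0 < eps / 2 / (norm d + 1)) by (apply Rdiv_lt_0_compat; lra).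
  destruct (Hg p _ He') as [delta [Hdel Hd]].
  assert (Hdp : 0 < delta / (norm d + 1)) by (apply Rdiv_lt_0_compat; lra).
  exists (mkposreal _ Hdp). simpl. intros hh Hh0 Hhl.
  assert (Hn : norm (vscale hh d) < delta).
  { rewrite norm_scale.
    assert (Rabs hh * norm d <= delta / (norm d + 1) * norm d).
    { apply Rmult_le_compat_r; lra. }
    assert (delta / (norm d + 1) * norm d < delta).
    { apply Rmult_lt_reg_r with (norm d + 1). lra. field_simplify; nra. }
    lra. }
  specialize (Hd _ Hn).
  replace (vadd x (vscale (tau + hh) d)) with (vadd p (vscale hh d)).
  2:{ apply veq; intros; unfold p, vadd, vscale; ring. }
  rewrite norm_scale, dot_scale_r in Hd.
  fold p.
  replace ((h (vadd p (vscale hh d)) - h p) / hh - dot (gh p) d)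
    with ((h (vadd p (vscale hh d)) - h p - hh * dot (gh p) d) / hh) by (field; auto).
  unfold Rdiv at 1. rewrite Rabs_mult, Rabs_inv.
  assert (0 < Rabs hh) by (apply Rabs_pos_lt; auto).
  apply Rmult_lt_reg_r with (Rabs hh); auto.
  rewrite Rmult_assoc, Rinv_l by lra.
  assert (eps / 2 / (norm d + 1) * (Rabs hh * norm d) < eps * Rabs hh).
  { replace (eps / 2 / (norm d + 1) * (Rabs hh * norm d)) with
      ((eps * Rabs hh) * (norm d / (2 * (norm d + 1)))) by (field; lra).
    assert (norm d / (2 * (norm d + 1)) < 1).
    { apply Rmult_lt_reg_r with (2 * (norm d + 1)). lra. field_simplify; lra. }
    assert (0 < eps * Rabs hh) by nra.
    assert (0 <= norm d / (2 * (norm d + 1))) by (apply Rmult_le_pos; [lra|left; apply Rinv_0_lt_compat; lra]).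
    nra. }
  lra.
Qed.

Lemma poly_deriv a b tau : derivable_pt_lim (fun s => a * s + b * s ^ 2) tau (a + 2 * b * tau).
Proof.
  pose proof (derivable_pt_lim_plus (mult_real_fct a id) (mult_real_fct b (fun y => y ^ 2)) tau
      _ _ (derivable_pt_lim_scal _ a tau _ (derivable_pt_lim_id tau))
          (derivable_pt_lim_scal _ b tau _ (derivable_pt_lim_pow tau 2))).
  unfold plus_fct, mult_real_fct, id in H. simpl in H.
  replace (a + 2 * b * tau) with (a * 1 + b * ((1 + 1) * (tau * 1))) by ring. exact H.
Qed.

Lemma descent n (h : Vec n -> R) gh L : is_gradient h gh -> lipschitz L gh ->
  forall x y, h y <= h x + dot (gh x) (vsub y x) + L / 2 * dot (vsub y x) (vsub y x).
Proof.
  intros Hg [HL Hl] x y. set (d := vsub y x).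
  set (q := fun s => h (vadd x (vscale s d)) - (dot (gh x) d * s + (L / 2 * dot d d) * s ^ 2)).
  set (q' := fun s => dot (gh (vadd x (vscale s d))) d - (dot (gh x) d + 2 * (L / 2 * dot d d) * s)).
  assert (Hq : forall s, derivable_pt_lim q s (q' s)).
  { intros s. apply derivable_pt_lim_minus. apply line_deriv; auto. apply poly_deriv. }
  set (pr := fun s => exist (fun l => derivable_pt_abs q s l) (q' s) (Hq s) : derivable_pt q s).
  destruct (MVT_cor1 q 0 1 pr Rlt_0_1) as [c [Hc Hc01]].
  simpl in Hc.
  assert (E0 : vadd x (vscale 0 d) = x) by (apply veq; intros; unfold vadd, vscale; ring).
  assert (E1 : vadd x (vscale 1 d) = y) by (apply veq; intros; unfold d, vadd, vscale, vsub; ring).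
  unfold q in Hc. rewrite E0, E1 in Hc.
  assert (q' c <= 0).
  { unfold q'. set (pc := vadd x (vscale c d)).
    pose proof (cs_le n (vsub (gh pc) (gh x)) d). rewrite dot_sub_l in H.
    pose proof (Hl pc x).
    assert (vsub pc x = vscale c d) by (apply veq; intros; unfold pc, vadd, vsub, vscale; ring).
    rewrite H1, norm_scale, Rabs_pos_eq in H0 by lra.
    pose proof (norm_nonneg n d). pose proof (norm_nonneg n (vsub (gh pc) (gh x))).
    pose proof (norm_sq n d).
    assert (norm (vsub (gh pc) (gh x)) * norm d <= L * (c * norm d) * norm d)
      by (apply Rmult_le_compat_r; lra).
    nra. }
  fold d. simpl in Hc. nra.
Qed.

Lemma BH1 n (h : Vec n -> R) gh L : convex h -> is_gradient h gh -> lipschitz L gh -> 0 < L ->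
  forall x y, dot (vsub (gh y) (gh x)) (vsub (gh y) (gh x)) / (2 * L)
              <= h y - h x - dot (gh x) (vsub y x).
Proof.
  intros Hc Hg Hl HL x y. set (D := vsub (gh y) (gh x)). set (k := - / L).
  set (z := vsub y (vscale (/ L) D)).
  pose proof (grad_ineq n h gh Hc Hg x z) as H1.
  pose proof (descent n h gh L Hg Hl y z) as H2.
  assert (E1 : vsub z x = vadd (vsub y x) (vscale k D))
    by (apply veq; intros; unfold z, k, vadd, vsub, vscale; ring).
  assert (E2 : vsub z y = vscale k D)
    by (apply veq; intros; unfold z, k, vadd, vsub, vscale; ring).
  rewrite E1 in H1. rewrite E2 in H2.
  rewrite dot_add_r, dot_scale_r in H1. rewrite !dot_scale_r, dot_scale_l in H2.
  assert (ED : dot D D = dot (gh y) D - dot (gh x) D) by (unfold D at 1; rewrite dot_sub_l; reflexivity).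
  assert (k * L = -1) by (unfold k; field; lra).
  apply Rmult_le_reg_r with (2 * L); [lra|].
  replace (dot D D / (2 * L) * (2 * L)) with (dot D D) by (field; lra).
  assert (h y - h x - dot (gh x) (vsub y x) >= - k * dot D D - L / 2 * (k * (k * dot D D))) .
  { replace (- k * dot D D) with (-k * dot (gh y) D + k * dot (gh x) D) by (rewrite ED; ring). lra. }
  assert ((- k * dot D D - L / 2 * (k * (k * dot D D))) * (2 * L) = dot D D).
  { replace ((- k * dot D D - L / 2 * (k * (k * dot D D))) * (2 * L))
      with (-2 * (k * L) * dot D D - (k * L) * (k * L) * dot D D) by (field; lra).
    rewrite H. ring. }
  rewrite <- H3 at 1. apply Rmult_le_compat_r; lra.
Qed.

Lemma cocoercive n (h : Vec n -> R) gh L : convex h -> is_gradient h gh -> lipschitz L gh ->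
  forall x y, dot (vsub (gh y) (gh x)) (vsub (gh y) (gh x))
              <= L * dot (vsub (gh y) (gh x)) (vsub y x).
Proof.
  intros Hc Hg Hl x y. pose proof Hl as [HL0 HL].
  destruct (Req_dec L 0) as [Z|Z].
  - subst L. specialize (HL y x). pose proof (norm_nonneg n (vsub (gh y) (gh x))).
    assert (norm (vsub (gh y) (gh x)) = 0) by lra.
    rewrite <- norm_sq, H0. lra.
  - pose proof (BH1 n h gh L Hc Hg Hl ltac:(lra) x y) as H1.
    pose proof (BH1 n h gh L Hc Hg Hl ltac:(lra) y x) as H2.
    assert (E1 : vsub (gh x) (gh y) = vscale (-1) (vsub (gh y) (gh x)))
      by (apply veq; intros; unfold vsub, vscale; ring).
    assert (E2 : vsub x y = vscale (-1) (vsub y x))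
      by (apply veq; intros; unfold vsub, vscale; ring).
    rewrite E1, E2 in H2. rewrite dot_scale_l, !dot_scale_r in H2.
    assert (E3 : dot (vsub (gh y) (gh x)) (vsub y x) = dot (gh y) (vsub y x) - dot (gh x) (vsub y x))
      by (rewrite dot_sub_l; reflexivity).
    set (DD := dot (vsub (gh y) (gh x)) (vsub (gh y) (gh x))) in *.
    assert (DD / (2 * L) + DD / (2 * L) <= dot (vsub (gh y) (gh x)) (vsub y x)) by lra.
    replace (DD / (2 * L) + DD / (2 * L)) with (DD / L) in H by (field; lra).
    apply Rmult_le_compat_l with (r := L) in H; [|lra].
    replace (L * (DD / L)) with DD in H by (field; lra). lra.
Qed.

Lemma S_contraction n (w : Vec n -> R) gw sigma L s :
  0 < sigma -> strongly_convex sigma w -> is_gradient w gw -> lipschitz L gw ->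
  0 < s <= 2 / (L + sigma) ->
  exists rho, 0 <= rho < 1 /\ forall x y,
    norm (vsub (vsub x (vscale s (gw x))) (vsub y (vscale s (gw y)))) <= rho * norm (vsub x y).
Proof.
  intros Hs Hsc Hg Hl Hst.
  pose proof Hl as [HL0 _].
  set (q := 1 - sigma * s * (2 - s * L)).
  assert (Hsl : s * L < 2).
  { destruct Hst as [Hs0 Hs1].
    apply Rmult_le_compat_l with (r := L) in Hs1; [|lra].
    assert (L * (2 / (L + sigma)) < 2).
    { apply Rmult_lt_reg_r with (L + sigma). lra. field_simplify; lra. }
    lra. }
  assert (Hq : q < 1) by (unfold q; destruct Hst; assert (0 < s * (2 - s*L)) by nra; nra).
  exists (sqrt (Rmax q 0)). split.
  { split. apply sqrt_pos. rewrite <- sqrt_1. apply sqrt_lt_1_alt. split. apply Rmax_r.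
    apply Rmax_lub_lt; lra. }
  intros x y.
  assert (E : vsub (vsub x (vscale s (gw x))) (vsub y (vscale s (gw y)))
              = vsub (vsub x y) (vscale s (vsub (gw x) (gw y))))
    by (apply veq; intros; unfold vsub, vscale; ring).
  rewrite E.
  set (d := vsub x y). set (D := vsub (gw x) (gw y)).
  pose proof (cocoercive n w gw L (sc_convex n sigma w ltac:(lra) Hsc) Hg Hl y x) as Hco.
  fold d D in Hco.
  pose proof (sc_grad_ineq n sigma w gw ltac:(lra) Hsc Hg x y) as A1.
  pose proof (sc_grad_ineq n sigma w gw ltac:(lra) Hsc Hg y x) as A2.
  assert (Ey : vsub y x = vscale (-1) d) by (apply veq; intros; unfold d, vsub, vscale; ring).
  rewrite Ey in A1. fold d in A2. rewrite dot_scale_l, !dot_scale_r in A1.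
  assert (Hmon : sigma * dot d d <= dot D d).
  { unfold D. rewrite dot_sub_l. lra. }
  apply norm_le_of_sq. apply Rmult_le_pos; [apply sqrt_pos|apply norm_nonneg].
  rewrite Rpow_mult_distr, pow2_sqrt by apply Rmax_r. rewrite norm_sq.
  rewrite nsq_sub, dot_scale_r, dot_scale_l, dot_scale_r.
  pose proof (dot_nonneg n d). pose proof (dot_nonneg n D).
  assert (dot d D = dot D d) by apply dot_sym.
  assert (q * dot d d <= Rmax q 0 * dot d d) by (apply Rmult_le_compat_r; [lra|apply Rmax_l]).
  assert (s * s * dot D D <= s * s * (L * dot D d)) by (apply Rmult_le_compat_l; nra).
  assert (0 < s * (2 - s * L)) by nra.
  assert (sigma * dot d d * (s * (2 - s * L)) <= dot D d * (s * (2 - s * L))) by (apply Rmult_le_compat_r; lra).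
  unfold q in *. nra.
Qed.

Definition prox_vi {n} (t : R) (g : Vec n -> ER) (w p : Vec n) : Prop :=
  exists gp, g p = ERfin gp /\
    forall u r, g u = ERfin r -> t * gp + dot (vsub w p) (vsub u p) <= t * r.

Lemma le_small a b c : 0 <= c -> (forall l, 0 < l < 1 -> a <= b + l * c) -> a <= b.
Proof.
  intros Hc H. apply le_eps with c; auto. intros eps He.
  set (l := Rmin eps (1/2)).
  assert (0 < l) by (unfold l; apply Rmin_pos; lra).
  assert (l <= eps) by apply Rmin_l. assert (l <= 1/2) by apply Rmin_r.
  specialize (H l ltac:(lra)). nra.
Qed.

Lemma convex_comb_eq n (u p : Vec n) l :
  vadd (vscale l u) (vscale (1 - l) p) = vadd p (vscale l (vsub u p)).
Proof. apply veq; intros; unfold vadd, vscale, vsub; ring. Qed.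

Lemma prox_to_vi n t (g : Vec n -> ER) w p : 0 < t -> proper g -> ext_convex g ->
  is_prox t g w p -> prox_vi t g w p.
Proof.
  intros Ht [x0 [r0 Hx0]] Hc Hp.
  destruct (g p) as [gp|] eqn:Egp.
  2:{ exfalso. specialize (Hp x0). rewrite Egp, Hx0 in Hp. simpl in Hp. exact Hp. }
  exists gp. split; auto. intros u r Hu.
  apply Rle_trans with (t * gp + dot (vsub w p) (vsub u p) +
     (t * r - t * gp - dot (vsub w p) (vsub u p))); [|lra].
  cut (t * gp <= t * r - dot (vsub w p) (vsub u p)). lra.
  apply le_small with (c := dot (vsub u p) (vsub u p) / 2).
  { pose proof (dot_nonneg n (vsub u p)); lra. }
  intros l Hl.
  specialize (Hc u p l Hl). rewrite Hu, Egp in Hc. simpl in Hc.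
  set (ul := vadd (vscale l u) (vscale (1 - l) p)) in *.
  destruct (g ul) as [v|] eqn:Ev; [|simpl in Hc; contradiction].
  simpl in Hc. specialize (Hp ul). rewrite Egp, Ev, !norm_sq in Hp. simpl in Hp.

  assert (E : vsub ul w = vadd (vsub p w) (vscale l (vsub u p)))
    by (apply veq; intros; unfold ul, vadd, vsub, vscale; ring).
  rewrite E, nsq_add, dot_scale_r, dot_scale_l, dot_scale_r in Hp.
  assert (E2 : vsub p w = vscale (-1) (vsub w p)) by (apply veq; intros; unfold vsub, vscale; ring).
  rewrite E2, !dot_scale_l, !dot_scale_r in Hp.
  assert (Hk : l * (t * gp) <= l * (t * r - dot (vsub w p) (vsub u p) + l * (dot (vsub u p) (vsub u p) / 2))).
  { assert (t * v <= t * (l * r + (1 - l) * gp)) by (apply Rmult_le_compat_l; lra). nra. }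
  apply Rmult_le_reg_l in Hk; lra.
Qed.

Lemma xstar_vi n t f gf L (g : Vec n -> ER) xs : 0 < t -> t <= 1 / L -> 0 < L ->
  is_gradient f gf -> lipschitz L gf -> proper g -> ext_convex g ->
  in_Xstar f g xs -> prox_vi t g (vsub xs (vscale t (gf xs))) xs.
Proof.
  intros Ht HtL HL Hg Hl [x0 [r0 Hx0]] Hc Hx.
  destruct (g xs) as [gx|] eqn:Egx.
  2:{ exfalso. specialize (Hx x0). unfold phi in Hx. rewrite Egx, Hx0 in Hx. simpl in Hx. exact Hx. }
  exists gx. split; auto. intros u r Hu.
  assert (E : vsub (vsub xs (vscale t (gf xs))) xs = vscale (-t) (gf xs))
    by (apply veq; intros; unfold vsub, vscale; ring).
  rewrite E, dot_scale_l.
  cut (gx <= r + dot (gf xs) (vsub u xs)). { intros; nra. }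
  apply le_small with (c := L / 2 * dot (vsub u xs) (vsub u xs)).
  { pose proof (dot_nonneg n (vsub u xs)); nra. }
  intros l Hl0.
  specialize (Hc u xs l Hl0). rewrite Hu, Egx in Hc. simpl in Hc.
  set (ul := vadd (vscale l u) (vscale (1 - l) xs)) in *.
  destruct (g ul) as [v|] eqn:Ev; [|simpl in Hc; contradiction].
  simpl in Hc. specialize (Hx ul). unfold phi in Hx. rewrite Egx, Ev in Hx. simpl in Hx.
  pose proof (descent n f gf L Hg Hl xs ul) as Hd.
  assert (E2 : vsub ul xs = vscale l (vsub u xs)) by (apply veq; intros; unfold ul, vadd, vsub, vscale; ring).
  rewrite E2, dot_scale_r, dot_scale_l, dot_scale_r in Hd.
  assert (Hk : l * gx <= l * (r + dot (gf xs) (vsub u xs) + l * (L / 2 * dot (vsub u xs) (vsub u xs)))) by nra.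
  apply Rmult_le_reg_l in Hk; lra.
Qed.

Lemma vi_nonexp n t (g : Vec n -> ER) w1 p1 w2 p2 :
  prox_vi t g w1 p1 -> prox_vi t g w2 p2 -> norm (vsub p1 p2) <= norm (vsub w1 w2).
Proof.
  intros [g1 [E1 H1]] [g2 [E2 H2]].
  specialize (H1 p2 g2 E2). specialize (H2 p1 g1 E1).
  set (e := vsub p1 p2). set (o := vsub w1 w2). set (a := vsub w1 p1).
  assert (Q1 : vsub p2 p1 = vscale (-1) e) by (apply veq; intros; unfold e, vsub, vscale; ring).
  assert (Q2 : vsub w2 p2 = vsub a (vsub o e)) by (apply veq; intros; unfold a, o, e, vsub; ring).
  rewrite Q1, dot_scale_r in H1. rewrite Q2 in H2. fold e a in H1, H2.
  rewrite dot_sub_l, dot_sub_l in H2.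
  assert (Hoe : dot e e <= dot o e) by lra.
  pose proof (cs_le n o e). rewrite <- (norm_sq n e) in Hoe.
  pose proof (norm_nonneg n e). pose proof (norm_nonneg n o).
  destruct (Req_dec (norm e) 0); [lra|]. nra.
Qed.

Lemma gradstep_nonexp n (f : Vec n -> R) gf L t : convex f -> is_gradient f gf -> lipschitz L gf -> 0 < L ->
  0 < t <= 1 / L -> forall x y,
  norm (vsub (vsub x (vscale t (gf x))) (vsub y (vscale t (gf y)))) <= norm (vsub x y).
Proof.
  intros Hc Hg Hl HL Ht x y.
  assert (E : vsub (vsub x (vscale t (gf x))) (vsub y (vscale t (gf y)))
              = vsub (vsub x y) (vscale t (vsub (gf x) (gf y))))
    by (apply veq; intros; unfold vsub, vscale; ring).
  rewrite E. apply norm_le_of_sq. apply norm_nonneg. rewrite norm_sq.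
  pose proof (cocoercive n f gf L Hc Hg Hl y x) as Hco.
  rewrite nsq_sub, dot_scale_r, dot_scale_l, dot_scale_r, (dot_sym n (vsub x y) (vsub (gf x) (gf y))).
  pose proof (dot_nonneg n (vsub (gf x) (gf y))).
  assert (tL : t * L <= 1).
  { destruct Ht. apply Rmult_le_compat_r with (r := L) in H1; [|lra].
    replace (1 / L * L) with 1 in H1 by (field; lra). lra. }
  set (a := dot (vsub (gf x) (gf y)) (vsub x y)) in *.
  set (b := dot (vsub (gf x) (gf y)) (vsub (gf x) (gf y))) in *.
  assert (0 <= a) by nra.
  assert (t * t * b <= t * t * (L * a)) by (apply Rmult_le_compat_l; nra).
  assert (t * (t * L) * a <= t * a) by (apply Rmult_le_compat_r; [lra|]; nra).
  nra.
Qed.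

Lemma T_nonexp n (f : Vec n -> R) gf L t (g : Vec n -> ER) : convex f -> is_gradient f gf -> lipschitz L gf -> 0 < L ->
  0 < t <= 1 / L -> forall x y p q,
  prox_vi t g (vsub x (vscale t (gf x))) p -> prox_vi t g (vsub y (vscale t (gf y))) q ->
  norm (vsub p q) <= norm (vsub x y).
Proof.
  intros. eapply Rle_trans. apply (vi_nonexp _ _ _ _ _ _ _ H4 H5).
  eapply gradstep_nonexp; eauto.
Qed.

Fixpoint psum (gam : nat -> R) (m : nat) : R :=
  match m with O => 0 | S m' => psum gam m' + gam m' end.

Lemma psum_sum gam m : sum_f_R0 gam m = psum gam (S m).
Proof. induction m; simpl; [ring|]. rewrite IHm. simpl. ring. Qed.

Lemma xu_lemma (a gam del : nat -> R) K :
  (forall k, 0 <= a k) -> (forall k, (K <= k)%nat -> 0 < gam k <= 1) ->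
  cv_infty (fun N => sum_f_R0 gam N) ->
  (forall k, (K <= k)%nat -> a (S k) <= (1 - gam k) * a k + gam k * del k) ->
  (forall e, 0 < e -> exists N, forall k, (N <= k)%nat -> del k <= e) ->
  Un_cv a 0.
Proof.
  intros Ha Hg Hs Hr Hd eps Heps.
  set (e := eps / 2). assert (He : 0 < e) by (unfold e; lra).
  destruct (Hd e He) as [N1 HN1].
  set (N := (K + N1)%nat).
  assert (Hrec : forall k, (N <= k)%nat -> a (S k) - e <= (1 - gam k) * (a k - e)).
  { intros k Hk. specialize (Hr k ltac:(unfold N in *; lia)). specialize (HN1 k ltac:(unfold N in *; lia)).
    specialize (Hg k ltac:(unfold N in *; lia)). nra. }
  assert (Hex : exists k, (N <= k)%nat /\ a k - e < e).
  { apply NNPP; intro Hn.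
    assert (Hall : forall k, (N <= k)%nat -> e <= a k - e).
    { intros k Hk. apply Rnot_lt_le. intro. apply Hn. exists k; auto. }
    assert (Hj : forall j, a (N + j)%nat - e + e * psum gam (N + j) <= a N - e + e * psum gam N).
    { induction j. rewrite Nat.add_0_r. lra.
      replace (N + S j)%nat with (S (N + j)) by lia. simpl psum.
      specialize (Hrec (N + j)%nat ltac:(lia)). specialize (Hall (N + j)%nat ltac:(lia)).
      specialize (Hg (N + j)%nat ltac:(unfold N; lia)). nra. }
    destruct (Hs ((a N - e + e * psum gam N) / e) ) as [M HM].
    specialize (HM (N + M)%nat ltac:(lia)). rewrite psum_sum in HM.
    specialize (Hj (S M)). replace (N + S M)%nat with (S (N + M)) in Hj by lia.
    specialize (Hall (S (N + M)) ltac:(lia)).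
    apply Rmult_lt_compat_l with (r := e) in HM; auto.
    replace (e * ((a N - e + e * psum gam N) / e)) with (a N - e + e * psum gam N) in HM by (field; lra).
    lra. }
  destruct Hex as [k0 [Hk0 Hb]].
  assert (Hstay : forall j, a (k0 + j)%nat - e < e).
  { induction j. rewrite Nat.add_0_r; auto.
    replace (k0 + S j)%nat with (S (k0 + j)) by lia.
    specialize (Hrec (k0 + j)%nat ltac:(lia)). specialize (Hg (k0 + j)%nat ltac:(unfold N in *; lia)).
    destruct (Rle_dec 0 (a (k0 + j)%nat - e)); nra. }
  exists k0. intros m Hm. unfold Rdist. rewrite Rminus_0_r, Rabs_pos_eq by auto.
  specialize (Hstay (m - k0)%nat). replace (k0 + (m - k0))%nat with m in Hstay by lia.
  unfold e in Hstay. lra.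
Qed.

Lemma subseq_build (Q : nat -> nat -> Prop) :
  (forall j N, exists k, (N <= k)%nat /\ Q j k) ->
  exists phi : nat -> nat, (forall j, (phi j < phi (S j))%nat) /\ (forall j, Q j (phi j)).
Proof.
  intros H.
  destruct (choice (fun (jN : nat * nat) k => (snd jN <= k)%nat /\ Q (fst jN) k)) as [c0 Hc0].
  { intros [j N]. apply H. }
  set (c := fun j N => c0 (j, N)).
  assert (Hc : forall j N, (N <= c j N)%nat /\ Q j (c j N)) by (intros j N; apply (Hc0 (j, N))).
  exists (fix phi j := match j with O => c O O | S j' => c (S j') (S (phi j')) end).
  split.
  - intros j. simpl. match goal with |- (?a < c (S j) (S ?b))%nat => destruct (Hc (S j) (S b)) as [A _] end. exact A.
  - intros [|j]; simpl; apply Hc.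
Qed.

Lemma incr_ge (phi : nat -> nat) : (forall j, (phi j < phi (S j))%nat) -> forall j, (j <= phi j)%nat.
Proof. intros H j; induction j; [lia|]. specialize (H j); lia. Qed.

Lemma incr_mono (phi : nat -> nat) : (forall j, (phi j < phi (S j))%nat) ->
  forall i j, (i <= j)%nat -> (phi i <= phi j)%nat.
Proof. intros H i j Hij; induction Hij; [lia|]. specialize (H m); lia. Qed.

Lemma small_inv eps : 0 < eps -> exists N, forall j, (N <= j)%nat -> / (INR j + 1) < eps.
Proof.
  intros He. destruct (INR_unbounded (/ eps)) as [N HN]. exists N. intros j Hj.
  apply le_INR in Hj. pose proof (pos_INR N).
  rewrite <- (Rinv_inv eps). apply Rinv_lt_contravar.
  apply Rmult_lt_0_compat; [apply Rinv_0_lt_compat; auto|lra]. lra.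
Qed.

Lemma BW1 (r : nat -> R) B (P : nat -> Prop) :
  (forall k, Rabs (r k) <= B) -> (forall N, exists k, (N <= k)%nat /\ P k) ->
  exists (phi : nat -> nat) l, (forall j, (phi j < phi (S j))%nat) /\ (forall j, P (phi j)) /\
    Un_cv (fun j => r (phi j)) l.
Proof.
  intros Hb HP.
  destruct (subseq_build (fun _ k => P k) (fun _ N => HP N)) as [psi [Hpsi1 Hpsi2]].
  destruct (Bolzano_Weierstrass (fun j => r (psi j)) (fun c => -B <= c <= B) (compact_P3 _ _)) as [l Hl].
  { intros j. specialize (Hb (psi j)). pose proof (Rle_abs (r (psi j))); pose proof (Rle_abs (- r (psi j))); rewrite Rabs_Ropp in *; lra. }
  destruct (subseq_build (fun j k => Rabs (r (psi k) - l) < / (INR j + 1))) as [phi2 [Hp1 Hp2]].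
  { intros j N. assert (Hpos : 0 < / (INR j + 1)) by (apply Rinv_0_lt_compat; pose proof (pos_INR j); lra).
    destruct (Hl (disc l (mkposreal _ Hpos)) N) as [p [Hp Hv]].
    { exists (mkposreal _ Hpos). intros y Hy; auto. }
    exists p; split; auto. }
  exists (fun j => psi (phi2 j)), l. split; [|split].
  - intros j. specialize (Hp1 j). apply incr_mono with (phi := psi) in Hp1; auto.
    specialize (Hpsi1 (phi2 j)). lia.
  - intros j; apply Hpsi2.
  - intros eps He. destruct (small_inv eps He) as [N HN]. exists N. intros j Hj.
    unfold Rdist. specialize (Hp2 j). specialize (HN j Hj). lra.
Qed.

Definition vtl {m} (v : Vec (S m)) : Vec m := fun i => v (Fin.FS i).

Lemma dot_S m (u v : Vec (S m)) : dot u v = u Fin.F1 * v Fin.F1 + dot (vtl u) (vtl v).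
Proof. reflexivity. Qed.

Lemma norm_tl m (u : Vec (S m)) : norm (vtl u) <= norm u.
Proof. unfold norm. apply sqrt_le_1_alt. rewrite (dot_S m u u). pose proof (Rle_0_sqr (u Fin.F1)). unfold Rsqr in H. lra. Qed.

Lemma abs_hd m (u : Vec (S m)) : Rabs (u Fin.F1) <= norm u.
Proof. apply abs_le_of_sq. apply norm_nonneg. rewrite norm_sq, dot_S.
  pose proof (dot_nonneg m (vtl u)). simpl. lra. Qed.

Lemma BW n : forall (u : nat -> Vec n) B (P : nat -> Prop),
  (forall k, norm (u k) <= B) -> (forall N, exists k, (N <= k)%nat /\ P k) ->
  exists (phi : nat -> nat) l, (forall j, (phi j < phi (S j))%nat) /\ (forall j, P (phi j)) /\
    vconverges (fun j => u (phi j)) l.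
Proof.
  induction n as [|m IH]; intros u B P Hb HP.
  - destruct (subseq_build (fun _ k => P k) (fun _ N => HP N)) as [psi [H1 H2]].
    exists psi, (fun _ => 0). split; [auto|split; [auto|]].
    intros eps He. exists O. intros k _. unfold norm. simpl. rewrite sqrt_0. auto.
  - destruct (IH (fun k => vtl (u k)) B P) as [phi1 [l1 [Hi1 [HP1 Hc1]]]]; auto.
    { intros k. eapply Rle_trans; [apply norm_tl|apply Hb]. }
    destruct (BW1 (fun j => u (phi1 j) Fin.F1) B (fun _ => True)) as [phi2 [a [Hi2 [_ Hc2]]]].
    { intros k. eapply Rle_trans; [apply abs_hd|apply Hb]. }
    { intros N; exists N; split; auto. }
    exists (fun j => phi1 (phi2 j)), (fun i => Fin.caseS' i (fun _ => R) a l1).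
    split; [|split].
    + intros j. specialize (Hi2 j). apply incr_mono with (phi := phi1) in Hi2; auto.
      specialize (Hi1 (phi2 j)). lia.
    + intros j; apply HP1.
    + intros eps He.
      assert (He2 : 0 < eps / 2) by lra.
      destruct (Hc1 _ He2) as [N1 HN1]. destruct (Hc2 _ He2) as [N2 HN2].
      exists (N1 + N2)%nat. intros k Hk.
      specialize (HN1 (phi2 k) ltac:(pose proof (incr_ge _ Hi2 k); lia)).
      specialize (HN2 k ltac:(lia)). unfold Rdist in HN2. simpl in HN2.
      apply norm_lt_of_sq. lra.
      rewrite dot_S.
      pose proof (norm_sq m (vsub (vtl (u (phi1 (phi2 k)))) l1)) as E.
      pose proof (norm_nonneg m (vsub (vtl (u (phi1 (phi2 k)))) l1)).
      assert (vtl (vsub (u (phi1 (phi2 k))) (fun i => Fin.caseS' i (fun _ => R) a l1))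
              = vsub (vtl (u (phi1 (phi2 k)))) l1) as Et by reflexivity.
      rewrite Et, <- E. unfold vsub at 1 2. simpl.
      set (h := u (phi1 (phi2 k)) Fin.F1 - a) in *.
      pose proof (Rle_abs h). pose proof (Rle_abs (- h)). rewrite Rabs_Ropp in *.
      nra.
Qed.

Lemma vconv_sub n (a b : nat -> Vec n) la lb : vconverges a la -> vconverges b lb ->
  vconverges (fun j => vsub (a j) (b j)) (vsub la lb).
Proof.
  intros Ha Hb eps He. destruct (Ha (eps/2) ltac:(lra)) as [N1 H1]. destruct (Hb (eps/2) ltac:(lra)) as [N2 H2].
  exists (N1 + N2)%nat. intros k Hk. specialize (H1 k ltac:(lia)). specialize (H2 k ltac:(lia)).
  replace (vsub (vsub (a k) (b k)) (vsub la lb)) with (vsub (vsub (a k) la) (vsub (b k) lb))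
    by (apply veq; intros; unfold vsub; ring).
  replace (vsub (vsub (a k) la) (vsub (b k) lb)) with (vadd (vsub (a k) la) (vscale (-1) (vsub (b k) lb)))
    by (apply veq; intros; unfold vadd, vsub, vscale; ring).
  eapply Rle_lt_trans. apply norm_triangle. rewrite norm_scale.
  replace (Rabs (-1)) with 1 by (unfold Rabs; destruct Rcase_abs; lra). lra.
Qed.

Lemma vconv_scale n (a : nat -> Vec n) la c : vconverges a la ->
  vconverges (fun j => vscale c (a j)) (vscale c la).
Proof.
  intros Ha eps He. destruct (Ha (eps / (Rabs c + 1))) as [N H1].
  { apply Rdiv_lt_0_compat; [lra|pose proof (Rabs_pos c); lra]. }
  exists N. intros k Hk. specialize (H1 k Hk).
  replace (vsub (vscale c (a k)) (vscale c la)) with (vscale c (vsub (a k) la))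
    by (apply veq; intros; unfold vsub, vscale; ring).
  rewrite norm_scale. pose proof (Rabs_pos c). pose proof (norm_nonneg n (vsub (a k) la)).
  assert (Rabs c * norm (vsub (a k) la) <= Rabs c * (eps / (Rabs c + 1))) by (apply Rmult_le_compat_l; lra).
  assert (Rabs c * (eps / (Rabs c + 1)) < eps).
  { apply Rmult_lt_reg_r with (Rabs c + 1). lra. field_simplify; lra. }
  lra.
Qed.

Lemma vconv_const n (c : Vec n) : vconverges (fun _ => c) c.
Proof. intros eps He. exists O. intros. rewrite norm_vsub_self. auto. Qed.

Lemma vconv_lip n (F : Vec n -> Vec n) L (a : nat -> Vec n) la : lipschitz L F -> vconverges a la ->
  vconverges (fun j => F (a j)) (F la).
Proof.
  intros [HL Hl] Ha eps He. destruct (Ha (eps / (L + 1))) as [N H1].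
  { apply Rdiv_lt_0_compat; lra. }
  exists N. intros k Hk. specialize (H1 k Hk). specialize (Hl (a k) la).
  pose proof (norm_nonneg n (vsub (a k) la)).
  assert (L * norm (vsub (a k) la) <= L * (eps / (L + 1))) by (apply Rmult_le_compat_l; lra).
  assert (L * (eps / (L + 1)) < eps).
  { apply Rmult_lt_reg_r with (L + 1). lra. field_simplify; lra. }
  lra.
Qed.

Lemma vconv_sub_zero n (a b : nat -> Vec n) l : vconverges a l ->
  (forall eps, 0 < eps -> exists N, forall k, (N <= k)%nat -> norm (vsub (a k) (b k)) < eps) ->
  vconverges b l.
Proof.
  intros Ha Hd eps He. destruct (Ha (eps/2) ltac:(lra)) as [N1 H1]. destruct (Hd (eps/2) ltac:(lra)) as [N2 H2].
  exists (N1 + N2)%nat. intros k Hk. specialize (H1 k ltac:(lia)). specialize (H2 k ltac:(lia)).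
  pose proof (norm_sub_tri n (b k) (a k) l). rewrite (vsub_sym_norm n (b k) (a k)) in H. lra.
Qed.

Lemma dot_conv n (a b : nat -> Vec n) la lb : vconverges a la -> vconverges b lb ->
  Un_cv (fun j => dot (a j) (b j)) (dot la lb).
Proof.
  intros Ha Hb eps He.
  set (A := norm la + 1). set (Bb := norm lb + 1).
  pose proof (norm_nonneg n la). pose proof (norm_nonneg n lb).
  destruct (Ha (eps / (2 * Bb)) ltac:(unfold Bb; apply Rdiv_lt_0_compat; lra)) as [N1 H1].
  destruct (Hb (Rmin 1 (eps / (2 * A))) ltac:(apply Rmin_pos; [lra|unfold A; apply Rdiv_lt_0_compat; lra])) as [N2 H2].
  exists (N1 + N2)%nat. intros k Hk. specialize (H1 k ltac:(lia)). specialize (H2 k ltac:(lia)).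
  unfold Rdist.
  replace (dot (a k) (b k) - dot la lb) with (dot (vsub (a k) la) (b k) + dot la (vsub (b k) lb))
    by (rewrite dot_sub_l, dot_sub_r; ring).
  pose proof (Rmin_l 1 (eps / (2 * A))). pose proof (Rmin_r 1 (eps / (2 * A))).
  assert (Hbk : norm (b k) <= Bb).
  { pose proof (norm_sub_tri n (b k) lb (fun _ => 0)) as T.
    replace (vsub (b k) (fun _ => 0)) with (b k) in T by (apply veq; intros; unfold vsub; ring).
    replace (vsub lb (fun _ => 0)) with lb in T by (apply veq; intros; unfold vsub; ring).
    unfold Bb; lra. }
  eapply Rle_lt_trans. apply Rabs_triang.
  pose proof (cauchy_schwarz n (vsub (a k) la) (b k)) as C1. pose proof (cauchy_schwarz n la (vsub (b k) lb)) as C2.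
  pose proof (norm_nonneg n (vsub (a k) la)) as P1. pose proof (norm_nonneg n (vsub (b k) lb)) as P2.
  pose proof (norm_nonneg n (b k)) as P3.
  assert (Q1 : norm (vsub (a k) la) * norm (b k) <= norm (vsub (a k) la) * Bb) by (apply Rmult_le_compat_l; lra).
  assert (Q2 : norm (vsub (a k) la) * Bb < eps / (2 * Bb) * Bb) by (apply Rmult_lt_compat_r; unfold Bb in *; lra).
  assert (Q3 : norm la * norm (vsub (b k) lb) <= A * (eps / (2 * A))) by (apply Rmult_le_compat; unfold A in *; lra).
  replace (eps / (2 * Bb) * Bb) with (eps / 2) in Q2 by (field; unfold Bb; lra).
  replace (A * (eps / (2 * A))) with (eps / 2) in Q3 by (field; unfold A; lra).
  lra.
Qed.

Lemma cluster_xstar n (f : Vec n -> R) gf L (g : Vec n -> ER) t (a p : nat -> Vec n) xb :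
  0 < t -> convex f -> is_gradient f gf -> lipschitz L gf -> lsc g ->
  vconverges a xb -> vconverges p xb ->
  (forall j, prox_vi t g (vsub (a j) (vscale t (gf (a j)))) (p j)) -> in_Xstar f g xb.
Proof.
  intros Ht Hc Hg Hl Hlsc Ha Hp Hvi u. unfold phi.
  destruct (g u) as [r|] eqn:Eu; [|destruct (g xb); simpl; auto].
  set (c := r + dot (gf xb) (vsub u xb)).
  set (D := fun j => dot (vsub (vsub (a j) (vscale t (gf (a j)))) (p j)) (vsub u (p j))).
  assert (HD : Un_cv D (dot (vsub (vsub xb (vscale t (gf xb))) xb) (vsub u xb))).
  { apply dot_conv. apply vconv_sub; auto. apply vconv_sub; auto. apply vconv_scale. eapply vconv_lip; eauto.
    apply vconv_sub; auto. apply vconv_const. }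
  assert (ED : dot (vsub (vsub xb (vscale t (gf xb))) xb) (vsub u xb) = - t * dot (gf xb) (vsub u xb)).
  { replace (vsub (vsub xb (vscale t (gf xb))) xb) with (vscale (- t) (gf xb))
      by (apply veq; intros; unfold vsub, vscale; ring). apply dot_scale_l. }
  rewrite ED in HD.
  assert (Hj : forall j, exists gp, g (p j) = ERfin gp /\ gp <= r - D j / t).
  { intros j. destruct (Hvi j) as [gp [E1 H1]]. exists gp. split; auto.
    specialize (H1 u r Eu). fold (D j) in H1.
    apply Rmult_le_reg_l with t; auto. field_simplify; lra. }
  assert (Hno : forall m, c < m -> ER_lt (ERfin m) (g xb) -> False).
  { intros m Hm Hlt. destruct (Hlsc xb m Hlt) as [delta [Hdel Hy]].
    destruct (Hp delta Hdel) as [N1 HN1].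
    destruct (HD ((m - c) * t)) as [N2 HN2]. { apply Rmult_lt_0_compat; lra. }
    specialize (HN1 (N1 + N2)%nat ltac:(lia)). specialize (HN2 (N1 + N2)%nat ltac:(lia)).
    specialize (Hy _ HN1). destruct (Hj (N1 + N2)%nat) as [gp [E1 H1]].
    rewrite E1 in Hy. simpl in Hy. unfold Rdist in HN2.
    pose proof (Rle_abs (- (D (N1 + N2)%nat - - t * dot (gf xb) (vsub u xb)))). rewrite Rabs_Ropp in H.
    assert (D (N1 + N2)%nat / t > - dot (gf xb) (vsub u xb) - (m - c)).
    { apply Rmult_lt_reg_r with t; auto. field_simplify; lra. }
    unfold c in *. lra. }
  pose proof (grad_ineq n f gf Hc Hg xb u).
  destruct (g xb) as [v|] eqn:Ev.
  - simpl. destruct (Rle_dec v c) as [Hv|Hv].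
    + unfold c in Hv. lra.
    + exfalso. apply (Hno ((v + c) / 2)); simpl; lra.
  - exfalso. apply (Hno (c + 1)); simpl; auto. lra.
Qed.

Lemma norm_comb n a b (u v : Vec n) : 0 <= a -> 0 <= b ->
  norm (vadd (vscale a u) (vscale b v)) <= a * norm u + b * norm v.
Proof. intros. eapply Rle_trans. apply norm_triangle. rewrite !norm_scale, !Rabs_pos_eq by auto. lra. Qed.

Lemma comb_sub n a (z y v : Vec n) :
  vsub (vadd (vscale a z) (vscale (1 - a) y)) v = vadd (vscale a (vsub z v)) (vscale (1 - a) (vsub y v)).
Proof. apply veq; intros; unfold vadd, vsub, vscale; ring. Qed.

Lemma norm_le_tri n (u v : Vec n) : norm u <= norm (vsub u v) + norm v.
Proof. replace u with (vadd (vsub u v) v) at 1 by (apply veq; intros; unfold vadd, vsub; ring). apply norm_triangle. Qed.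

Lemma sum_scal c (u : nat -> R) N : sum_f_R0 (fun k => c * u k) N = c * sum_f_R0 u N.
Proof. induction N; simpl; [ring|]. rewrite IHN; ring. Qed.

Lemma xstar_convex n (f : Vec n -> R) (g : Vec n -> ER) u v l :
  convex f -> ext_convex g -> in_Xstar f g u -> in_Xstar f g v -> 0 < l < 1 ->
  in_Xstar f g (vadd (vscale l u) (vscale (1 - l) v)).
Proof.
  intros Hf Hg Hu Hv Hl y. specialize (Hu y). specialize (Hv y).
  pose proof (Hf u v l ltac:(lra)) as Hfc. pose proof (Hg u v l Hl) as Hgc.
  unfold phi in *. destruct (g y) as [gy|]; [|destruct (g (vadd (vscale l u) (vscale (1 - l) v))); simpl; auto].
  destruct (g u) as [gu|]; [|simpl in Hu; contradiction].
  destruct (g v) as [gv|]; [|simpl in Hv; contradiction].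
  destruct (g (vadd (vscale l u) (vscale (1 - l) v))) as [gl|]; [|simpl in Hgc; contradiction].
  simpl in *.
  assert (l * (gu + f u) + (1 - l) * (gv + f v) <= l * (gy + f y) + (1 - l) * (gy + f y)).
  { apply Rplus_le_compat; apply Rmult_le_compat_l; lra. }
  lra.
Qed.

Lemma omega_min n (f : Vec n -> R) gf Lf (g : Vec n -> ER) (w : Vec n -> R) gw sigma :
  0 < Lf -> convex f -> is_gradient f gf -> lipschitz Lf gf -> proper g -> lsc g -> ext_convex g ->
  (exists x, in_Xstar f g x) -> 0 < sigma -> strongly_convex sigma w -> is_gradient w gw ->
  exists xs, in_Xstar f g xs /\ forall u, in_Xstar f g u -> w xs <= w u.
Proof.
  intros HL Hf Hgf Hl Hp Hlsc Hgc [xh Hxh] Hs Hsc Hgw.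
  set (G := norm (gw xh)).
  assert (HG : 0 <= G) by apply norm_nonneg.
  assert (Hlow : forall u, w xh + - G * norm (vsub u xh) + sigma / 2 * norm (vsub u xh) ^ 2 <= w u).
  { intros u. pose proof (sc_grad_ineq n sigma w gw ltac:(lra) Hsc Hgw xh u).
    pose proof (cs_ge n (gw xh) (vsub u xh)). rewrite norm_sq. fold G in H0. lra. }
  set (E := fun r => exists u, in_Xstar f g u /\ r = - w u).
  assert (HB : bound E).
  { exists (- w xh + G * G / (2 * sigma)). intros r [u [Hu ->]]. specialize (Hlow u).
    pose proof (norm_nonneg n (vsub u xh)).
    assert (sigma / 2 * norm (vsub u xh) ^ 2 - G * norm (vsub u xh) >= - (G * G / (2 * sigma))).
    { apply Rle_ge. apply Rmult_le_reg_r with (2 * sigma); [lra|].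
      replace (- (G * G / (2 * sigma)) * (2 * sigma)) with (- (G * G)) by (field; lra).
      pose proof (Rle_0_sqr (sigma * norm (vsub u xh) - G)). unfold Rsqr in *. nra. }
    lra. }
  destruct (completeness E HB (ex_intro _ (- w xh) (ex_intro _ xh (conj Hxh eq_refl)))) as [m [Hm1 Hm2]].
  assert (Hj : forall j : nat, exists u, in_Xstar f g u /\ w u < - m + / (INR j + 1)).
  { intros j. apply NNPP. intros Hn. assert (Hpos : 0 < / (INR j + 1)) by (apply Rinv_0_lt_compat; pose proof (pos_INR j); lra).
    assert (is_upper_bound E (m - / (INR j + 1))).
    { intros r [u [Hu ->]]. apply Rnot_lt_le. intro. apply Hn. exists u. split; auto. lra. }
    specialize (Hm2 _ H). lra. }
  destruct (choice _ Hj) as [us Hus].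
  assert (Hwm : - m <= w xh) by (assert (E (- w xh)) by (exists xh; auto); specialize (Hm1 _ H); lra).
  set (Dd := Rmax 1 (2 * (1 + G) / sigma)).
  assert (Hbd : forall j, norm (us j) <= norm xh + Dd).
  { intros j. destruct (Hus j) as [Hu1 Hu2]. specialize (Hlow (us j)).
    assert (Hinv : / (INR j + 1) <= 1).
    { rewrite <- Rinv_1. apply Rinv_le_contravar. lra. pose proof (pos_INR j); lra. }
    pose proof (norm_le_tri n (us j) xh).
    assert (norm (vsub (us j) xh) <= Dd).
    { set (d := norm (vsub (us j) xh)) in *. pose proof (norm_nonneg n (vsub (us j) xh)). fold d in H0.
      destruct (Rle_dec d 1). unfold Dd; pose proof (Rmax_l 1 (2 * (1 + G) / sigma)); lra.
      assert (sigma / 2 * d <= 1 + G) by nra.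
      assert (d <= 2 * (1 + G) / sigma).
      { apply Rmult_le_reg_r with sigma; auto. field_simplify; lra. }
      unfold Dd; pose proof (Rmax_r 1 (2 * (1 + G) / sigma)); lra. }
    lra. }
  destruct (BW n us (norm xh + Dd) (fun _ => True) Hbd) as [phi0 [ub [Hi [_ Hc]]]].
  { intros N; exists N; split; auto. }
  assert (Hub : in_Xstar f g ub).
  { apply (cluster_xstar n f gf Lf g (1 / Lf) (fun j => us (phi0 j)) (fun j => us (phi0 j)) ub); auto.
    apply Rdiv_lt_0_compat; lra.
    intros j. apply (xstar_vi n (1 / Lf) f gf Lf g); auto. apply Rdiv_lt_0_compat; lra. lra.
    apply Hus. }
  exists ub. split; auto.
  assert (Hwub : w ub <= - m).
  { apply Rnot_lt_le. intro Hlt. set (eps := (w ub + m) / 2).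
    assert (He : 0 < eps) by (unfold eps; lra).
    pose proof (dot_conv n (fun _ => gw ub) (fun j => vsub (us (phi0 j)) ub) (gw ub) (vsub ub ub)
      (vconv_const n _) (vconv_sub n _ _ _ _ Hc (vconv_const n _))) as Hdc.
    rewrite dot_sub_r, Rminus_diag in Hdc.
    destruct (Hdc eps He) as [N1 HN1]. destruct (small_inv eps He) as [N2 HN2].
    specialize (HN1 (N1 + N2)%nat ltac:(lia)). simpl in HN1. unfold Rdist in HN1. rewrite Rminus_0_r in HN1.
    specialize (HN2 (phi0 (N1 + N2)%nat) ltac:(pose proof (incr_ge _ Hi (N1 + N2)); lia)).
    destruct (Hus (phi0 (N1 + N2)%nat)) as [_ Hu2].
    pose proof (grad_ineq n w gw (sc_convex n sigma w ltac:(lra) Hsc) Hgw ub (us (phi0 (N1 + N2)%nat))).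
    pose proof (Rle_abs (- dot (gw ub) (vsub (us (phi0 (N1 + N2)%nat)) ub))). rewrite Rabs_Ropp in H0.
    unfold eps in *. lra. }
  intros u Hu. assert (E (- w u)) by (exists u; auto). specialize (Hm1 _ H). lra.
Qed.

Theorem proposition3p1
  (n : nat)
  (* Assumption (A) *)
  (f : Vec n -> R) (gradf : Vec n -> Vec n) (Lf : R)
  (g : Vec n -> ER)
  (Hf_conv : convex f) (Hf_grad : is_gradient f gradf)
  (HLf_pos : 0 < Lf) (Hf_lip : lipschitz Lf gradf)
  (Hg_proper : proper g) (Hg_lsc : lsc g) (Hg_conv : ext_convex g)
  (HXstar : exists x, in_Xstar f g x)
  (* Assumption (B) *)
  (omega : Vec n -> R) (gradw : Vec n -> Vec n) (sigma Lw : R)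
  (Hsigma : 0 < sigma) (Hw_sc : strongly_convex sigma omega)
  (Hw_grad : is_gradient omega gradw) (Hw_lip : lipschitz Lw gradw)
  (* Assumption (C) *)
  (alpha : nat -> R)
  (Ha_range : forall k, (1 <= k)%nat -> 0 < alpha k <= 1)
  (Ha_lim : Un_cv alpha 0)
  (Ha_sum : cv_infty (fun N => sum_f_R0 (fun k => alpha (S k)) N))
  (Ha_ratio : Un_cv (fun k => alpha (S k) / alpha k) 1)
  (* step sizes *)
  (t s : R) (Ht : 0 < t <= 1 / Lf) (Hs : 0 < s <= 2 / (Lw + sigma))
  (* BiG-SAM iterates, starting from an arbitrary x^0 = x 0 *)
  (x y z : nat -> Vec n)
  (Hy : forall k, is_prox t g (vsub (x k) (vscale t (gradf (x k)))) (y (S k)))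
  (Hz : forall k, z (S k) = vsub (x k) (vscale s (gradw (x k))))
  (Hx : forall k, x (S k) = vadd (vscale (alpha (S k)) (z (S k)))
                                 (vscale (1 - alpha (S k)) (y (S k)))) :
  exists xs : Vec n,
    in_Xstar f g xs /\
    vconverges x xs /\
    (forall u, in_Xstar f g u -> dot (gradw xs) (vsub u xs) >= 0) /\
    (* consequently xs is the unique minimizer of omega over X^* *)
    (forall u, in_Xstar f g u -> omega xs <= omega u) /\
    (forall v, in_Xstar f g v -> (forall u, in_Xstar f g u -> omega v <= omega u) -> v = xs).
Proof.
  assert (Hal : forall k, 0 < alpha (S k) <= 1) by (intros; apply Ha_range; lia).
  destruct (S_contraction n omega gradw sigma Lw s Hsigma Hw_sc Hw_grad Hw_lip Hs) as [rho [Hrho HS]].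
  destruct Ht as [Ht0 Ht1].
  assert (Hvi : forall k, prox_vi t g (vsub (x k) (vscale t (gradf (x k)))) (y (S k))).
  { intros; apply prox_to_vi; auto. }
  assert (Hxs_vi : forall u, in_Xstar f g u -> prox_vi t g (vsub u (vscale t (gradf u))) u).
  { intros u Hu; apply (xstar_vi n t f gradf Lf g); auto. }
  assert (TN : forall a b p q, prox_vi t g (vsub a (vscale t (gradf a))) p ->
                 prox_vi t g (vsub b (vscale t (gradf b))) q -> norm (vsub p q) <= norm (vsub a b)).
  { intros. eapply (T_nonexp n f gradf Lf t g); eauto. }
  pose proof HXstar as [xh Hxh].
  set (Sxh := vsub xh (vscale s (gradw xh))).
  set (R0 := Rmax (norm (vsub (x 0%nat) xh)) (norm (vsub Sxh xh) / (1 - rho))).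
  assert (HR0 : norm (vsub Sxh xh) <= (1 - rho) * R0).
  { pose proof (Rmax_r (norm (vsub (x 0%nat) xh)) (norm (vsub Sxh xh) / (1 - rho))).
    fold R0 in H. apply Rmult_le_compat_l with (r := 1 - rho) in H; [|lra].
    replace ((1 - rho) * (norm (vsub Sxh xh) / (1 - rho))) with (norm (vsub Sxh xh)) in H by (field; lra). auto. }
  assert (Hbd : forall k, norm (vsub (x k) xh) <= R0).
  { induction k. apply Rmax_l.
    rewrite Hx, comb_sub. eapply Rle_trans. apply norm_comb; destruct (Hal k); lra.
    assert (norm (vsub (z (S k)) xh) <= R0).
    { rewrite Hz. eapply Rle_trans. apply (norm_sub_tri n _ Sxh _).
      specialize (HS (x k) xh). fold Sxh in HS.
      assert (rho * norm (vsub (x k) xh) <= rho * R0) by (apply Rmult_le_compat_l; lra). lra. }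
    assert (norm (vsub (y (S k)) xh) <= R0) by (eapply Rle_trans; [apply (TN _ _ _ _ (Hvi k) (Hxs_vi xh Hxh))|auto]).
    destruct (Hal k). nra. }
  assert (HR0pos : 0 <= R0) by (eapply Rle_trans; [apply norm_nonneg|apply (Hbd O)]).
  assert (Hbz : forall k, norm (vsub (z (S k)) xh) <= R0).
  { intros k. rewrite Hz. eapply Rle_trans. apply (norm_sub_tri n _ Sxh _).
    specialize (HS (x k) xh). fold Sxh in HS. specialize (Hbd k).
    assert (rho * norm (vsub (x k) xh) <= rho * R0) by (apply Rmult_le_compat_l; lra). lra. }
  assert (Hby : forall k, norm (vsub (y (S k)) xh) <= R0).
  { intros k. eapply Rle_trans; [apply (TN _ _ _ _ (Hvi k) (Hxs_vi xh Hxh))|auto]. }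
  set (M := 2 * R0).
  assert (Hzy : forall k, norm (vsub (z (S k)) (y (S k))) <= M).
  { intros k. eapply Rle_trans. apply (norm_sub_tri n _ xh _). rewrite (vsub_sym_norm n xh).
    specialize (Hbz k); specialize (Hby k). unfold M; lra. }
  set (b := fun k => norm (vsub (x k) (x (pred k)))).
  set (gam := fun k => (1 - rho) * alpha (S k)).
  assert (Hgam : forall k, (0 <= k)%nat -> 0 < gam k <= 1).
  { intros k _. unfold gam. destruct (Hal k). split. apply Rmult_lt_0_compat; lra.
    assert ((1 - rho) * alpha (S k) <= 1 * 1) by (apply Rmult_le_compat; lra). lra. }
  assert (Hsum : cv_infty (fun N => sum_f_R0 gam N)).
  { intros Mm. destruct (Ha_sum (Mm / (1 - rho))) as [N HN]. exists N. intros k Hk.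
    specialize (HN k Hk). unfold gam. rewrite sum_scal.
    apply Rmult_lt_compat_l with (r := 1 - rho) in HN; [|lra].
    replace ((1 - rho) * (Mm / (1 - rho))) with Mm in HN by (field; lra). auto. }
  set (del := fun k => Rabs (alpha (S k) - alpha k) * M / ((1 - rho) * alpha (S k))).
  assert (Hrec2 : forall k, (1 <= k)%nat -> b (S k) <= (1 - gam k) * b k + gam k * del k).
  { intros k Hk. destruct k as [|k']; [lia|].
    unfold b, del, gam. simpl pred.
    set (a1 := alpha (S (S k'))). set (a0 := alpha (S k')).
    assert (E : vsub (x (S (S k'))) (x (S k')) =
      vadd (vadd (vscale a1 (vsub (z (S (S k'))) (z (S k')))) (vscale (1 - a1) (vsub (y (S (S k'))) (y (S k')))))
           (vscale (a1 - a0) (vsub (z (S k')) (y (S k'))))).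
    { rewrite (Hx (S k')), (Hx k'). fold a1 a0. apply veq; intros; unfold vadd, vsub, vscale; ring. }
    rewrite E. destruct (Hal (S k')) as [Ha1 Ha1']. fold a1 in Ha1, Ha1'.
    eapply Rle_trans. apply norm_triangle.
    rewrite (norm_scale n (a1 - a0)).
    pose proof (norm_comb n a1 (1 - a1) (vsub (z (S (S k'))) (z (S k'))) (vsub (y (S (S k'))) (y (S k'))) ltac:(lra) ltac:(lra)).
    assert (Hzz : norm (vsub (z (S (S k'))) (z (S k'))) <= rho * norm (vsub (x (S k')) (x k'))).
    { rewrite !Hz. apply HS. }
    assert (Hyy : norm (vsub (y (S (S k'))) (y (S k'))) <= norm (vsub (x (S k')) (x k'))) by (apply TN; auto).
    specialize (Hzy k').
    replace ((1 - rho) * a1 * (Rabs (a1 - a0) * M / ((1 - rho) * a1))) with (Rabs (a1 - a0) * M)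
      by (field; lra).
    pose proof (Rabs_pos (a1 - a0)).
    assert (Rabs (a1 - a0) * norm (vsub (z (S k')) (y (S k'))) <= Rabs (a1 - a0) * M) by (apply Rmult_le_compat_l; lra).
    assert (a1 * norm (vsub (z (S (S k'))) (z (S k'))) <= a1 * (rho * norm (vsub (x (S k')) (x k')))) by (apply Rmult_le_compat_l; lra).
    assert ((1 - a1) * norm (vsub (y (S (S k'))) (y (S k'))) <= (1 - a1) * norm (vsub (x (S k')) (x k'))) by (apply Rmult_le_compat_l; lra).
    nra. }
  assert (Hdel : forall e, 0 < e -> exists N, forall k, (N <= k)%nat -> del k <= e).
  { intros e He.
    set (eta := Rmin (1/2) (e * (1 - rho) / (2 * (M + 1)))).
    assert (Heta : 0 < eta) by (unfold eta; apply Rmin_pos; [lra|apply Rdiv_lt_0_compat; unfold M in *; nra]).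
    destruct (Ha_ratio eta Heta) as [N HN]. exists (S N). intros k Hk.
    destruct k as [|k']; [lia|].
    specialize (HN (S k') ltac:(lia)). unfold Rdist in HN.
    unfold del. set (A' := alpha (S (S k'))). set (A := alpha (S k')). fold A A' in HN.
    destruct (Hal k') as [HA _]. destruct (Hal (S k')) as [HA' _]. fold A in HA. fold A' in HA'.
    assert (HA1 : Rabs (A' - A) <= eta * A).
    { replace (A' - A) with ((A' / A - 1) * A) by (field; lra).
      rewrite Rabs_mult, (Rabs_pos_eq A) by lra. apply Rmult_le_compat_r; lra. }
    assert (HA2 : A < 2 * A').
    { pose proof (Rmin_l (1/2) (e * (1 - rho) / (2 * (M + 1)))). fold eta in H.
      pose proof (Rle_abs (- (A' / A - 1))). rewrite Rabs_Ropp in H0.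
      assert (1/2 < A' / A) by lra.
      apply Rmult_lt_compat_r with (r := A) in H1; auto.
      replace (A' / A * A) with A' in H1 by (field; lra). lra. }
    pose proof (Rmin_r (1/2) (e * (1 - rho) / (2 * (M + 1)))) as Heta2. fold eta in Heta2.
    apply Rmult_le_reg_r with ((1 - rho) * A'). apply Rmult_lt_0_compat; lra.
    replace (Rabs (A' - A) * M / ((1 - rho) * A') * ((1 - rho) * A')) with (Rabs (A' - A) * M) by (field; lra).
    assert (HM : 0 <= M) by (unfold M; lra).
    assert (Rabs (A' - A) * M <= eta * A * M) by (apply Rmult_le_compat_r; lra).
    assert (eta * A * M <= eta * (2 * A') * M) by (apply Rmult_le_compat_r; [lra|]; apply Rmult_le_compat_l; lra).
    assert (eta * (2 * A') * M <= e * (1 - rho) / (2 * (M + 1)) * (2 * A') * M).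
    { apply Rmult_le_compat_r; [lra|]. apply Rmult_le_compat_r; lra. }
    assert (e * (1 - rho) / (2 * (M + 1)) * (2 * A') * M <= e * ((1 - rho) * A')).
    { replace (e * (1 - rho) / (2 * (M + 1)) * (2 * A') * M) with (e * ((1 - rho) * A') * (M / (M + 1))) by (field; lra).
      assert (M / (M + 1) <= 1). { apply Rmult_le_reg_r with (M + 1). lra. field_simplify; lra. }
      assert (0 <= e * ((1 - rho) * A')) by (apply Rmult_le_pos; [lra|apply Rmult_le_pos; lra]).
      assert (0 <= M / (M + 1)) by (apply Rmult_le_pos; [lra|left; apply Rinv_0_lt_compat; lra]).
      nra. }
    lra. }
  assert (Hb0 : Un_cv b 0).
  { apply (xu_lemma b gam del 1); auto. intros; apply norm_nonneg.
    intros k _. apply Hgam. lia. }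
  assert (Hstep : forall eps, 0 < eps -> exists N, forall k, (N <= k)%nat -> norm (vsub (x (S k)) (x k)) < eps).
  { intros eps He. destruct (Hb0 eps He) as [N HN]. exists N. intros k Hk.
    specialize (HN (S k) ltac:(lia)). unfold Rdist, b in HN. simpl pred in HN.
    rewrite Rminus_0_r, Rabs_pos_eq in HN by apply norm_nonneg. auto. }
  assert (Hxy : forall eps, 0 < eps -> exists N, forall k, (N <= k)%nat -> norm (vsub (x k) (y (S k))) < eps).
  { intros eps He. destruct (Hstep (eps/2) ltac:(lra)) as [N1 HN1].
    destruct (Ha_lim (eps / (2 * (M + 1)))) as [N2 HN2]. { apply Rdiv_lt_0_compat; unfold M; lra. }
    exists (N1 + N2)%nat. intros k Hk. specialize (HN1 k ltac:(lia)). specialize (HN2 (S k) ltac:(lia)).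
    unfold Rdist in HN2. rewrite Rminus_0_r in HN2.
    eapply Rle_lt_trans. apply (norm_sub_tri n _ (x (S k)) _). rewrite (vsub_sym_norm n (x k)).
    assert (E : vsub (x (S k)) (y (S k)) = vscale (alpha (S k)) (vsub (z (S k)) (y (S k))))
      by (rewrite Hx; apply veq; intros; unfold vadd, vsub, vscale; ring).
    rewrite E, norm_scale. specialize (Hzy k).
    assert (Rabs (alpha (S k)) * norm (vsub (z (S k)) (y (S k))) <= eps / (2 * (M + 1)) * M).
    { apply Rmult_le_compat; try lra. apply Rabs_pos. apply norm_nonneg. }
    assert (eps / (2 * (M + 1)) * M < eps / 2).
    { apply Rmult_lt_reg_r with (2 * (M + 1)). unfold M; lra. field_simplify; unfold M in *; nra. }
    lra. }
  destruct (omega_min n f gradf Lf g omega gradw sigma HLf_pos Hf_conv Hf_grad Hf_lip Hg_proper Hg_lsc Hg_conv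
              HXstar Hsigma Hw_sc Hw_grad) as [xs [Hxs Hmin]].
  assert (HVI : forall u, in_Xstar f g u -> dot (gradw xs) (vsub u xs) >= 0).
  { intros u Hu. apply Rle_ge. apply Ropp_le_cancel. rewrite Ropp_0.
    apply le_small with (c := Lw / 2 * dot (vsub u xs) (vsub u xs)).
    { pose proof (dot_nonneg n (vsub u xs)). destruct Hw_lip. nra. }
    intros l Hl.
    pose proof (Hmin _ (xstar_convex n f g u xs l Hf_conv Hg_conv Hu Hxs Hl)).
    pose proof (descent n omega gradw Lw Hw_grad Hw_lip xs (vadd (vscale l u) (vscale (1 - l) xs))).
    rewrite convex_comb_eq in H, H0.
    replace (vsub (vadd xs (vscale l (vsub u xs))) xs) with (vscale l (vsub u xs)) in H0
      by (apply veq; intros; unfold vadd, vsub, vscale; ring).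
    rewrite dot_scale_r, dot_scale_l, dot_scale_r in H0.
    assert (l * (- dot (gradw xs) (vsub u xs)) <= l * (0 + l * (Lw / 2 * dot (vsub u xs) (vsub u xs)))) by nra.
    apply Rmult_le_reg_l in H1; lra. }
  assert (HBx : forall k, norm (x k) <= norm xh + R0).
  { intros k. pose proof (norm_le_tri n (x k) xh). specialize (Hbd k). lra. }
  assert (Hlim : forall eps, 0 < eps -> exists N, forall k, (N <= k)%nat -> - eps <= dot (gradw xs) (vsub (x k) xs)).
  { intros eps He. apply NNPP. intro Hn.
    assert (HP : forall N, exists k, (N <= k)%nat /\ dot (gradw xs) (vsub (x k) xs) < - eps).
    { intros N. apply NNPP. intro Hn2. apply Hn. exists N. intros k Hk.
      apply Rnot_lt_le. intro. apply Hn2. exists k; auto. }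
    destruct (BW n x _ _ HBx HP) as [phi0 [xb [Hi [HPp Hc]]]].
    assert (Hc2 : vconverges (fun j => y (S (phi0 j))) xb).
    { apply (vconv_sub_zero n _ _ xb Hc). intros e He'. destruct (Hxy e He') as [N HN].
      exists N. intros k Hk. apply HN. pose proof (incr_ge _ Hi k). lia. }
    assert (Hxb : in_Xstar f g xb).
    { apply (cluster_xstar n f gradf Lf g t (fun j => x (phi0 j)) (fun j => y (S (phi0 j))) xb); auto. }
    specialize (HVI xb Hxb).
    pose proof (dot_conv n (fun _ => gradw xs) (fun j => vsub (x (phi0 j)) xs) (gradw xs) (vsub xb xs)
      (vconv_const n _) (vconv_sub n _ _ _ _ Hc (vconv_const n _))) as Hd.
    destruct (Hd eps He) as [N HN]. specialize (HN N (le_n _)). specialize (HPp N).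
    unfold Rdist in HN. simpl in HN.
    pose proof (Rle_abs (dot (gradw xs) (vsub (x (phi0 N)) xs) - dot (gradw xs) (vsub xb xs))).
    pose proof (Rle_abs (- (dot (gradw xs) (vsub (x (phi0 N)) xs) - dot (gradw xs) (vsub xb xs)))).
    rewrite Rabs_Ropp in H0. lra. }
  set (Sxs := vsub xs (vscale s (gradw xs))).
  set (a := fun k => dot (vsub (x k) xs) (vsub (x k) xs)).
  set (del2 := fun k => - 2 * s / (1 - rho) * dot (gradw xs) (vsub (x (S k)) xs)).
  assert (Hrec : forall k, (0 <= k)%nat -> a (S k) <= (1 - gam k) * a k + gam k * del2 k).
  { intros k _. unfold a, del2, gam. set (al := alpha (S k)). destruct (Hal k) as [Hal1 Hal2]. fold al in Hal1, Hal2.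
    set (Av := vadd (vscale al (vsub (z (S k)) Sxs)) (vscale (1 - al) (vsub (y (S k)) xs))).
    set (Bv := vscale al (vscale (- s) (gradw xs))).
    assert (E : vsub (x (S k)) xs = vadd Av Bv).
    { rewrite Hx. fold al. unfold Av, Bv, Sxs. apply veq; intros; unfold vadd, vsub, vscale; ring. }
    assert (F2 : dot Bv (vsub (x (S k)) xs) = dot Av Bv + dot Bv Bv).
    { rewrite E, dot_add_r, (dot_sym n Bv Av). ring. }
    assert (F3 : dot Bv (vsub (x (S k)) xs) = al * (- s) * dot (gradw xs) (vsub (x (S k)) xs)).
    { unfold Bv. rewrite !dot_scale_l. ring. }
    rewrite E at 1 2. rewrite nsq_add.
    set (nk := norm (vsub (x k) xs)).
    assert (F4 : norm Av <= (1 - (1 - rho) * al) * nk).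
    { unfold Av. eapply Rle_trans. apply norm_comb; lra.
      assert (norm (vsub (z (S k)) Sxs) <= rho * nk) by (rewrite Hz; apply HS).
      assert (norm (vsub (y (S k)) xs) <= nk) by (apply TN; auto).
      assert (al * norm (vsub (z (S k)) Sxs) <= al * (rho * nk)) by (apply Rmult_le_compat_l; lra).
      assert ((1 - al) * norm (vsub (y (S k)) xs) <= (1 - al) * nk) by (apply Rmult_le_compat_l; lra).
      lra. }
    pose proof (norm_nonneg n Av). pose proof (norm_nonneg n (vsub (x k) xs)). fold nk in H0.
    pose proof (norm_sq n Av). pose proof (norm_sq n (vsub (x k) xs)). fold nk in H2.
    assert (Hg1 : 0 <= 1 - (1 - rho) * al <= 1).
    { split; [|nra]. assert ((1 - rho) * al <= 1 * 1) by (apply Rmult_le_compat; lra). lra. }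
    assert (norm Av * norm Av <= ((1 - (1 - rho) * al) * nk) * ((1 - (1 - rho) * al) * nk))
      by (apply Rmult_le_compat; lra).
    assert ((1 - (1 - rho) * al) * nk * ((1 - (1 - rho) * al) * nk) <= (1 - (1 - rho) * al) * (nk * nk)).
    { replace ((1 - (1 - rho) * al) * nk * ((1 - (1 - rho) * al) * nk))
        with ((1 - (1 - rho) * al) * ((1 - (1 - rho) * al) * (nk * nk))) by ring.
      pose proof (Rle_0_sqr nk). unfold Rsqr in H4.
      assert ((1 - (1 - rho) * al) * (nk * nk) <= 1 * (nk * nk)) by (apply Rmult_le_compat_r; lra).
      apply Rle_trans with (1 * (1 - (1 - rho) * al) * (nk * nk)).
      rewrite <- Rmult_assoc. apply Rmult_le_compat_r. nra. apply Rmult_le_compat_r; lra. lra. }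
    pose proof (dot_nonneg n Bv).
    replace ((1 - rho) * al * (- 2 * s / (1 - rho) * dot (gradw xs) (vsub (x (S k)) xs)))
      with (2 * (al * (- s) * dot (gradw xs) (vsub (x (S k)) xs))) by (field; lra).
    rewrite <- F3, F2. simpl in H1, H2. nra. }
  assert (Ha0 : Un_cv a 0).
  { apply (xu_lemma a gam del2 0); auto. intros; apply dot_nonneg.
    intros e He. destruct (Hlim (e * (1 - rho) / (2 * s))) as [N HN].
    { apply Rdiv_lt_0_compat; nra. }
    exists N. intros k Hk. specialize (HN (S k) ltac:(lia)). unfold del2.
    replace (- 2 * s / (1 - rho) * dot (gradw xs) (vsub (x (S k)) xs))
      with (- (2 * s / (1 - rho)) * dot (gradw xs) (vsub (x (S k)) xs)) by (field; lra).
    assert (0 < 2 * s / (1 - rho)) by (apply Rdiv_lt_0_compat; lra).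
    assert (- (2 * s / (1 - rho)) * dot (gradw xs) (vsub (x (S k)) xs) <= (2 * s / (1 - rho)) * (e * (1 - rho) / (2 * s))) by nra.
    replace (2 * s / (1 - rho) * (e * (1 - rho) / (2 * s))) with e in H0 by (field; lra). lra. }
  exists xs. split; [auto|split; [|split; [auto|split; [auto|]]]].
  - intros eps He. destruct (Ha0 (eps * eps)) as [N HN]. nra.
    exists N. intros k Hk. specialize (HN k Hk). unfold Rdist, a in HN.
    rewrite Rminus_0_r, Rabs_pos_eq in HN by apply dot_nonneg.
    apply norm_lt_of_sq; [lra|]. simpl; lra.
  - intros v Hv Hvm. specialize (Hvm xs Hxs). specialize (HVI v Hv).
    pose proof (sc_grad_ineq n sigma omega gradw ltac:(lra) Hw_sc Hw_grad xs v).
    pose proof (dot_nonneg n (vsub v xs)).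
    assert (dot (vsub v xs) (vsub v xs) = 0) by nra.
    apply veq. intros i. pose proof (dot_zero_eq n _ H1 i). unfold vsub in H2. lra.
Qed.
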